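(* Let $(X_n)_{n\ge1}$ be real random variables for which there exist constants $C_0\ge0$, $C_1,C_2>0$, $\beta\in(0,1)$ and $\gamma\in(0,1/\beta)$ such that for all $x>0$ and all $n\ge1$, $$\Pr\big(X_n\ge C_0n^{-\beta}+x\big)\le C_1\exp(-C_2\,n\,x^\gamma).$$ Let $\delta\in(\beta,\min(\gamma^{-1},1))$ and $\alpha:=\gamma(1-\delta)/\{\gamma(1-\delta)+(1-\gamma\delta)\}$. Then there exists a constant $C_4>0$ depending only on $C_0,C_1,C_2,\beta,\gamma,\delta$ such that for every $n\ge1$ and every $y\ge1$, $$\Pr\Big(\bar X_n\ge \frac{C_0}{1-\beta}n^{-\beta}+\frac{3}{1-\delta}n^{-\delta}y\Big)\le C_4\,n^{\alpha}\exp\big\{-C_2\,n^{\alpha(1-\gamma\delta)}y^\gamma\big\},$$ where $\bar X_n:=\frac1n\sum_{i=1}^n X_i$. *)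

(* Defs.v *)
From HB Require Import structures.
From mathcomp Require Import all_boot all_order all_algebra.
From mathcomp Require Import all_classical all_reals all_analysis.
Set Implicit Arguments. Unset Strict Implicit. Unset Printing Implicit Defensive.
Import Order.TTheory GRing.Theory Num.Theory.
Local Open Scope ring_scope.

Definition alpha_exp (R : realType) (gamma delta : R) : R :=
  gamma * (1 - delta) / (gamma * (1 - delta) + (1 - gamma * delta)).

Definition Xbar (R : realType) (T : Type) (X : nat -> T -> R) (n : nat) (w : T) : R :=
  (n%:R)^-1 * \sum_(1 <= i < n.+1) X i w.

(* Main.v *)
Require Import Defs.
From HB Require Import structures.
From mathcomp Require Import all_boot all_order all_algebra.
From mathcomp Require Import all_classical all_reals all_analysis.
From mathcomp Require Import ring lra.
Import Order.TTheory GRing.Theory Num.Theory.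
Local Open Scope ring_scope.
Local Open Scope classical_set_scope.

Section Helpers.
Variable R : realType.

Lemma wamgm (s u : R) : 0 <= s -> s <= 1 -> 0 <= u -> u `^ s <= s * u + (1 - s).
Proof.
move=> s0 s1 u0.
have [->|u0'] := eqVneq u 0.
  have [->|sn0] := eqVneq s 0; first by rewrite powRr0 mul0r subr0 add0r.
  by rewrite powR0 // mulr0 add0r subr_ge0.
have upos : 0 < u by rewrite lt_neqAle eq_sym u0' u0.
have := convex_expR (Itv01 s0 s1) (ln u) 0.
rewrite !convRE /= expR0 mulr0 addr0 lnK ?posrE //.
rewrite /powR (negbTE u0') mulrC mulr1 => H; exact: H.
Qed.
Lemma step_pow (s : R) (k : nat) : 0 <= s < 1 ->
  k%:R `^ (1 - s) + (1 - s) * (k.+1)%:R `^ (- s) <= (k.+1)%:R `^ (1 - s).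
Proof.
case/andP=> s0 s1.
set a : R := (k.+1)%:R.
have a0 : 0 < a by rewrite /a ltr0n.
set u := k%:R / a.
have u0 : 0 <= u by rewrite /u divr_ge0 // ltW.
have ku : k%:R = u * a by rewrite /u mulfVK // gt_eqF.
have Ha : a `^ (1 - s) = a * a `^ (- s).
  rewrite powRD; first by rewrite powRr1 // ltW.
  by apply/implyP => _; rewrite gt_eqF.
rewrite ku (powRM _ u0 (ltW a0)).
rewrite Ha.
have q0 : 0 < a `^ (- s) by rewrite powR_gt0.
have e0 : 0 <= 1 - s by lra.
have e1 : 1 - s <= 1 by lra.
have W := @wamgm (1 - s) u e0 e1 u0.
have key : u `^ (1 - s) * a + (1 - s) <= a.
  have H := ler_wpM2r (ltW a0) W.
  have E : ((1 - s) * u + (1 - (1 - s))) * a = (1 - s) * k%:R + s * a by rewrite ku; ring.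
  rewrite E in H.
  have Ea : a = k%:R + 1 by rewrite /a -natr1.
  rewrite Ea in H *. lra.
have E2 : u `^ (1 - s) * (a * a `^ (- s)) + (1 - s) * a `^ (- s) = (u `^ (1 - s) * a + (1 - s)) * a `^ (- s) by ring.
rewrite E2 ler_pM2r //.
Qed.
Lemma psum (s : R) (n K : nat) : 0 <= s < 1 ->
  \sum_(1 <= i < n.+1) (if (i <= K)%N then i%:R `^ (- s) else 0)
    <= (minn n K)%:R `^ (1 - s) / (1 - s).
Proof.
move=> hs; have /andP[s0 s1] := hs.
have e0 : 0 < 1 - s by lra.
elim: n => [|n IH].
  by rewrite big_geq // divr_ge0 ?powR_ge0 // ltW.
rewrite big_nat_recr //=.
case: (leqP n.+1 K) => hK.
  have hnK : minn n K = n by apply/minn_idPl; exact: ltnW.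
  rewrite hnK in IH.
  have St := @step_pow s n hs.
  have : n%:R `^ (1 - s) / (1 - s) + n.+1%:R `^ (- s) <= n.+1%:R `^ (1 - s) / (1 - s).
    rewrite -[X in _ + X <= _](mulfK (x := 1 - s)) ?gt_eqF // -mulrDl ler_pM2r ?invr_gt0 //.
    by rewrite (mulrC _ (1 - s)).
  move=> H; apply: le_trans H; exact: lerD.
have hnK : minn n K = K by apply/minn_idPr.
by rewrite hnK in IH; rewrite addr0.
Qed.

Lemma csum (n K : nat) :
  \sum_(1 <= i < n.+1) (if (i <= K)%N then 1 else 0 : R) <= (minn n K)%:R.
Proof.
elim: n => [|n IH]; first by rewrite big_geq.
rewrite big_nat_recr //=.
case: (leqP n.+1 K) => hK.
  have hnK : minn n K = n by apply/minn_idPl; exact: ltnW.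
  by rewrite hnK in IH; rewrite -natr1 lerD.
have hnK : minn n K = K by apply/minn_idPr.
by rewrite hnK in IH; rewrite addr0.
Qed.

Lemma sq_sum (n : nat) :
  \sum_(1 <= i < n.+2) (i%:R ^+ 2)^-1 <= 2 - (n.+1%:R)^-1 :> R.
Proof.
elim: n => [|n IH].
  rewrite big_nat1 expr1n invr1; lra.
rewrite big_nat_recr //=.
suff : (n.+2%:R ^+ 2)^-1 <= (n.+1%:R)^-1 - (n.+2%:R)^-1 :> R.
  move: IH; set S := \sum_(_ <= _ < _) _; move: S (n.+2%:R ^- 2) (n.+1%:R^-1 : R) (n.+2%:R^-1 : R) => S a b c IH H; lra.
have p1 : 0 < n.+1%:R :> R by rewrite ltr0n.
have p2 : 0 < n.+2%:R :> R by rewrite ltr0n.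
have -> : (n.+1%:R)^-1 - (n.+2%:R)^-1 = (n.+1%:R * n.+2%:R)^-1 :> R.
  have e : n.+2%:R = n.+1%:R + 1 :> R by rewrite -natr1.
  rewrite e; field.
  have h0 : (0:R) <= n%:R := ler0n _ _.
  have g1 : (0:R) < 1 + n%:R + 1 by lra.
  have g2 : (0:R) < 1 + n%:R by lra.
  by rewrite (gt_eqF g1) (gt_eqF g2).
rewrite lef_pV2 ?posrE ?exprn_gt0 ?mulr_gt0 // expr2 ler_pM2r //.
by rewrite ler_nat.
Qed.
Lemma exp_sq (a p : R) (k i : nat) : 0 < a -> 0 < p -> 2 <= p * k%:R -> (0 < k)%N ->
  (1 <= i)%N -> expR (- (a * i%:R `^ p)) <= (k%:R / a) ^+ k * (i%:R ^+ 2)^-1.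
Proof.
move=> a0 p0 pk k0 i1.
have kr : 0 < k%:R :> R by rewrite ltr0n.
have ir : 1 <= i%:R :> R by rewrite ler1n.
have ir0 : 0 <= i%:R :> R by rewrite ler0n.
set t := a * i%:R `^ p.
have t0 : 0 <= t by rewrite mulr_ge0 ?powR_ge0 // ltW.
have H1 : (t / k%:R) ^+ k <= expR t.
  have -> : expR t = expR (t / k%:R) ^+ k by rewrite -expRM_natr mulfVK // gt_eqF.
  apply: lerXn2r; rewrite ?nnegrE ?expR_ge0 //.
    by rewrite divr_ge0 // ltW.
  have := expR_ge1Dx (t / k%:R); lra.
have H2 : (t / k%:R) ^+ k = (a / k%:R) ^+ k * (i%:R `^ p) ^+ k.
  by rewrite /t mulrAC exprMn.
have H3 : i%:R ^+ 2 <= (i%:R `^ p) ^+ k.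
  rewrite -powR_mulrn ?powR_ge0 // -powRrM -powR_mulrn //.
  exact: ler_powR.
have ak : 0 < (a / k%:R) ^+ k by rewrite exprn_gt0 // divr_gt0.
have H4 : (a / k%:R) ^+ k * i%:R ^+ 2 <= expR t.
  apply: le_trans H1; rewrite H2 ler_pM2l //.
have -> : (k%:R / a) ^+ k * (i%:R ^+ 2)^-1 = ((a / k%:R) ^+ k * i%:R ^+ 2)^-1.
  by rewrite [X in _ = X]invfM; congr (_ * _); rewrite -exprVn invf_div.
rewrite expRN lef_pV2 ?posrE ?expR_gt0 // mulr_gt0 // exprn_gt0 //.
by apply: lt_le_trans ir.
Qed.
Definition xth (g d y N : R) (K i : nat) : R :=
  if (i <= K)%N then y * N `^ g^-1 * i%:R `^ (- g^-1) else 2 * y * i%:R `^ (- d).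

Lemma sum_x (g d y N : R) (K n : nat) : 0 < g -> 0 < d < 1 -> d <= g^-1 ->
  0 <= y -> 0 <= N ->
  \sum_(1 <= i < n.+1) xth g d y N K i <=
  y * N `^ g^-1 * ((minn n K)%:R `^ (1 - d) / (1 - d))
  + 2 * y * (n%:R `^ (1 - d) / (1 - d)).
Proof.
move=> g0 hd dg y0 N0.
have hd' : 0 <= d < 1 by case/andP: hd => d0 d1; rewrite ltW.
have c0 : 0 <= y * N `^ g^-1 by rewrite mulr_ge0 ?powR_ge0.
apply: (@le_trans _ _ (\sum_(1 <= i < n.+1)
   (y * N `^ g^-1 * (if (i <= K)%N then i%:R `^ (- d) else 0)
    + 2 * y * (if (i <= n)%N then i%:R `^ (- d) else 0)))).
  rewrite big_nat [X in _ <= X]big_nat; apply: ler_sum => i /andP[i1 iN].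
  rewrite ltnS in iN; rewrite iN /xth.
  have ir : 1 <= i%:R :> R by rewrite ler1n.
  case: ifP => _.
    rewrite -[X in X <= _]addr0; apply: lerD.
      apply: ler_wpM2l => //; apply: ler_powR => //.
      by rewrite lerN2; lra.
    by rewrite mulr_ge0 ?powR_ge0 // mulr_ge0.
  by rewrite mulr0 add0r.
rewrite big_split /= -!mulr_sumr.
apply: lerD; apply: ler_wpM2l.
- exact: c0.
- exact: psum.
- by rewrite mulr_ge0.
- by have := @psum d n n hd'; rewrite minnn.
Qed.
Lemma term_bound (C1 C2 g d y N p eps : R) (K k i : nat) :
  0 < C1 -> 0 < C2 -> 0 < g -> p = 1 - g * d -> 0 < p -> 1 <= y -> 0 <= N ->
  eps = C2 * (2 `^ g - 1) -> 0 < eps -> 2 <= p * k%:R -> (0 < k)%N ->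
  (forall j : nat, (K < j)%N -> N <= j%:R `^ p) -> (1 <= i)%N ->
  C1 * expR (- (C2 * i%:R * xth g d y N K i `^ g)) <=
  C1 * expR (- (C2 * N * y `^ g)) * (if (i <= K)%N then 1 else 0)
  + C1 * expR (- (C2 * N * y `^ g)) * ((k%:R / eps) ^+ k * (i%:R ^+ 2)^-1).
Proof.
move=> C10 C20 g0 pE p0 y1 N0 epsE eps0 pk k0 hK i1.
set E := expR (- (C2 * N * y `^ g)).
have E0 : 0 < E by rewrite expR_gt0.
have ir : 1 <= i%:R :> R by rewrite ler1n.
have ir0 : 0 <= i%:R :> R by rewrite ler0n.
have ine0 : i%:R != 0 :> R by rewrite pnatr_eq0 -lt0n.
have y0 : 0 <= y by lra.
have yg : 1 <= y `^ g.
  have := @ge0_ler_powR _ g (ltW g0) 1 y; rewrite powR1 => H; apply: H => //; rewrite nnegrE //.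
have cpos : 0 <= (k%:R / eps) ^+ k * (i%:R ^+ 2)^-1.
  apply: mulr_ge0; first by rewrite exprn_ge0 // divr_ge0 // ltW.
  by rewrite invr_ge0 exprn_ge0.
rewrite /xth; case: ifP => iK.
  have e1 : (N `^ g^-1) `^ g = N by rewrite -powRrM mulVf ?gt_eqF // powRr1.
  have e2 : (i%:R `^ (- g^-1)) `^ g = i%:R^-1.
    by rewrite -powRrM mulNr mulVf ?gt_eqF // powR_inv1.
  rewrite !powRM ?powR_ge0 ?mulr_ge0 //.
  rewrite e1 e2.
  have -> : C2 * i%:R * (y `^ g * N * i%:R^-1) = C2 * N * y `^ g by field.
  rewrite -/E mulr1 -[X in X <= _]addr0; apply: lerD => //.
  by rewrite mulr_ge0 // mulr_ge0 // ltW.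
  all: try by rewrite ?powR_ge0 ?mulr_ge0 ?powR_ge0.
have Ki : (K < i)%N by rewrite ltnNge iK.
have hN := hK i Ki.
have e3 : i%:R * (i%:R `^ (- d)) `^ g = i%:R `^ p.
  rewrite -powRrM pE powRD; last by apply/implyP => _; exact: ine0.
  by rewrite powRr1 // mulNr (mulrC d g).
rewrite !powRM ?powR_ge0 ?mulr_ge0 //.
have -> : C2 * i%:R * (2 `^ g * y `^ g * (i%:R `^ (- d)) `^ g)
   = C2 * (2 `^ g * y `^ g * (i%:R * (i%:R `^ (- d)) `^ g)) by ring.
rewrite e3.
have two1 : 1 <= 2 `^ g.
  have := @ge0_ler_powR _ g (ltW g0) 1 2; rewrite powR1 => H; apply: H; rewrite ?nnegrE // ?ler0n; lra.
have ip0 : 0 <= i%:R `^ p by rewrite powR_ge0.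
have A : N * y `^ g + (2 `^ g - 1) * i%:R `^ p <= 2 `^ g * y `^ g * i%:R `^ p.
  have h1 : 0 <= y `^ g * (i%:R `^ p - N) by rewrite mulr_ge0 ?powR_ge0 // subr_ge0.
  have h2 : 0 <= (2 `^ g - 1) * (i%:R `^ p * (y `^ g - 1)).
    by rewrite mulr_ge0 ?mulr_ge0 // subr_ge0.
  have -> : 2 `^ g * y `^ g * i%:R `^ p = N * y `^ g + (2 `^ g - 1) * i%:R `^ p
     + (y `^ g * (i%:R `^ p - N) + (2 `^ g - 1) * (i%:R `^ p * (y `^ g - 1))) by ring.
  rewrite -[X in X <= _]addr0; apply: lerD => //; exact: addr_ge0.
have B : expR (- (C2 * (2 `^ g * y `^ g * i%:R `^ p))) <= E * expR (- (eps * i%:R `^ p)).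
  rewrite /E -expRD ler_expR -opprD lerN2 epsE.
  rewrite -!mulrA -mulrDr; apply: ler_wpM2l; first exact: ltW.
  by rewrite mulrA.
have Cx := @exp_sq eps p k i eps0 p0 pk k0 i1.
rewrite mulr0 add0r -[C1 * E * _]mulrA ler_pM2l //.
apply: (le_trans B); rewrite ler_pM2l //.
Qed.
End Helpers.

Theorem proposition4 (R : realType) (C0 C1 C2 beta gamma delta : R) :
  0 <= C0 -> 0 < C1 -> 0 < C2 ->
  0 < beta < 1 -> 0 < gamma < beta^-1 ->
  beta < delta -> delta < Num.min gamma^-1 1 ->
  exists C4 : R, 0 < C4 /\
    forall (d : measure_display) (T : measurableType d) (P : probability T R)
           (X : nat -> T -> R),
      (forall n, measurable_fun setT (X n)) ->
      (forall (n : nat) (x : R), (1 <= n)%N -> 0 < x ->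
         (P [set w | (C0 * n%:R `^ (- beta) + x <= X n w)%R]
           <= (C1 * expR (- (C2 * n%:R * x `^ gamma)))%:E)%E) ->
      forall (n : nat) (y : R), (1 <= n)%N -> 1 <= y ->
        (P [set w | (C0 / (1 - beta) * n%:R `^ (- beta)
                   + 3 / (1 - delta) * n%:R `^ (- delta) * y <= Xbar X n w)%R]
          <= (C4 * n%:R `^ (alpha_exp gamma delta)
              * expR (- (C2 * n%:R `^ (alpha_exp gamma delta * (1 - gamma * delta))
                         * y `^ gamma)))%:E)%E.
Proof.
move=> hC0 hC1 hC2 /andP[b0 b1] /andP[g0 gb] bd.
rewrite lt_min => /andP[dg d1].
have d0 : 0 < delta by lra.
have gd1 : gamma * delta < 1.
  have := dg; rewrite -(ltr_pM2l g0) mulfV ?gt_eqF //.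
set p := 1 - gamma * delta.
have p0 : 0 < p by rewrite /p; lra.
have two_g : 1 < 2 `^ gamma.
  rewrite /powR (negbTE (_ : (2:R) != 0)) ?pnatr_eq0 // expR_gt1.
  by rewrite mulr_gt0 // ln_gt0 // ltr1n.
set eps := C2 * (2 `^ gamma - 1).
have eps0 : 0 < eps by rewrite /eps mulr_gt0 // subr_gt0.
set k := (Num.Def.trunc (2 / p)).+1.
have k0 : (0 < k)%N by [].
have pk : 2 <= p * k%:R.
  have := truncnS_gt (2 / p); rewrite -/k ltr_pdivrMr // mulrC => H; exact: ltW.
set c := (k%:R / eps) ^+ k.
have c0 : 0 <= c by rewrite /c exprn_ge0 // divr_ge0 // ltW.
exists (C1 * (1 + 2 * c)); split.
  by rewrite mulr_gt0 //; lra.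
move=> dd T P X hX hP n y n1 y1.
have y0 : 0 < y by lra.
set nn : R := n%:R.
have nn1 : 1 <= nn by rewrite /nn ler1n.
have nn0 : 0 < nn by lra.
have nnne0 : nn != 0 by rewrite gt_eqF.
have hb' : 0 <= beta < 1 by rewrite b1 ltW.
have hd' : 0 <= delta < 1 by rewrite d1 ltW.
have hd'' : 0 < delta < 1 by rewrite d1 d0.
set a := alpha_exp gamma delta.
have den0 : 0 < gamma * (1 - delta) + p by rewrite addr_gt0 // mulr_gt0 // subr_gt0.
have a0 : 0 <= a.
  rewrite /a /alpha_exp divr_ge0 // ?(ltW den0) //.
  by apply: mulr_ge0; lra.
set M := nn `^ a.
have M1 : 1 <= M by have := ler_powR nn1 a0; rewrite powRr0.
have M0 : 0 <= M by lra.
set N := nn `^ (a * p).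
have NM : N = M `^ p by rewrite /N powRrM.
have N0 : 0 < N by rewrite /N powR_gt0.
set K := Num.Def.trunc M.
have hK : forall j : nat, (K < j)%N -> N <= j%:R `^ p.
  move=> j; rewrite /K truncn_lt_nat // => Mj; rewrite NM.
  by apply: ge0_ler_powR; rewrite ?nnegrE ?ler0n // ltW.
have KM : (K%:R : R) <= M by rewrite /K truncn_le.
set x := @xth R gamma delta y N K.
set A := fun i : nat => [set w | C0 * i%:R `^ (- beta) + x i <= X i w].
set T0 := C0 / (1 - beta) * nn `^ (- beta) + 3 / (1 - delta) * nn `^ (- delta) * y.
set E := expR (- (C2 * N * y `^ gamma)).
have mXbar : measurable_fun setT (Xbar X n).
  rewrite /Xbar; apply: measurable_realfun.measurable_funM.
    exact: measurable_cst.
  exact: measurable_sum.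
have mA : forall i, measurable (A i).
  move=> i; have := measurable_fun_le measurableT (measurable_cst (C0 * i%:R `^ (- beta) + x i)) (hX i).
  by rewrite setTI.
have mEv : measurable [set w | T0 <= Xbar X n w].
  have := measurable_fun_le measurableT (measurable_cst T0) mXbar.
  by rewrite setTI.
have budget : \sum_(1 <= i < n.+1) (C0 * i%:R `^ (- beta) + x i) <= nn * T0.
  rewrite big_split /= -mulr_sumr.
  have Sb : \sum_(1 <= i < n.+1) i%:R `^ (- beta) <= nn `^ (1 - beta) / (1 - beta).
    have E1 : \sum_(1 <= i < n.+1) i%:R `^ (- beta)
       = \sum_(1 <= i < n.+1) (if (i <= n)%N then i%:R `^ (- beta) else 0).
      by apply: eq_big_nat => i /andP[_ iN]; rewrite -ltnS iN.
    by rewrite E1; have := @psum R beta n n hb'; rewrite minnn.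
  have Sx := @sum_x R gamma delta y N K n g0 hd'' (ltW dg) (ltW y0) (ltW N0).
  have minM : (minn n K)%:R `^ (1 - delta) <= M `^ (1 - delta).
    apply: ge0_ler_powR; rewrite ?nnegrE ?ler0n //; first lra.
    by apply: le_trans KM; rewrite ler_nat geq_minr.
  have NM2 : N `^ gamma^-1 * M `^ (1 - delta) = nn `^ (1 - delta).
    rewrite /N /M -!powRrM -powRD; last by apply/implyP => _.
    congr (_ `^ _); rewrite /a /alpha_exp /p; field.
    by rewrite (gt_eqF g0) andbT gt_eqF //; rewrite /p in den0.
  have nnb : nn `^ (1 - beta) = nn * nn `^ (- beta).
    by rewrite powRD ?powRr1 ?(ltW nn0) //; apply/implyP => _.
  have nnd : nn `^ (1 - delta) = nn * nn `^ (- delta).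
    by rewrite powRD ?powRr1 ?(ltW nn0) //; apply/implyP => _.
  set Z := nn `^ (1 - delta) / (1 - delta).
  have Sx2 : \sum_(1 <= i < n.+1) x i <= 3 * y * Z.
    apply: (le_trans Sx).
    have H1 : y * N `^ gamma^-1 * ((minn n K)%:R `^ (1 - delta) / (1 - delta)) <= y * Z.
      rewrite -mulrA ler_wpM2l ?(ltW y0) // mulrA /Z ler_pM2r ?invr_gt0 ?subr_gt0 //.
      by rewrite -NM2 ler_wpM2l ?powR_ge0.
    have -> : 3 * y * Z = y * Z + 2 * y * Z by ring.
    exact: lerD.
  apply: le_trans (lerD (ler_wpM2l hC0 Sb) Sx2) _.
  rewrite le_eqVlt; apply/orP; left; apply/eqP.
  rewrite /Z /T0 nnb nnd; field.
  by apply/andP; split; rewrite gt_eqF // subr_gt0.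
have xpos : forall i : nat, (1 <= i)%N -> 0 < x i.
  move=> i i1; have ir : 0 < i%:R :> R by rewrite ltr0n.
  rewrite /x /xth; case: ifP => _.
    by rewrite mulr_gt0 ?powR_gt0 // mulr_gt0 // powR_gt0.
  by rewrite mulr_gt0 ?powR_gt0 // mulr_gt0.
have step1 : (P [set w | (T0 <= Xbar X n w)%R] <= \sum_(j < n) P (A j.+1))%E.
  apply: (@content_subadditive _ _ _ P _ (fun j => A j.+1) n) => //.
  move=> w /= Tw; rewrite -(bigcup_mkord n (fun j => A j.+1)).
  have [[j jn Aj]|nA] := pselect (exists2 j, (j < n)%N & A j.+1 w).
    by exists j.
  exfalso.
  have lt : forall i, (1 <= i < n.+1)%N -> X i w < C0 * i%:R `^ (- beta) + x i.
    move=> i /andP[i1 iN]; rewrite ltNge; apply/negP => Hi; apply: nA.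
    exists i.-1; first by rewrite -ltnS prednK.
    by rewrite prednK.
  have n1' : (1 < n.+1)%N by rewrite ltnS.
  have S1 := ltr_sum_nat n1' lt.
  move: Tw; rewrite /Xbar -/nn => Tw.
  have : nn * T0 <= \sum_(1 <= i < n.+1) X i w.
    by have := ler_wpM2l (ltW nn0) Tw; rewrite mulrA mulfV // mul1r.
  move=> H; have := lt_le_trans S1 budget; rewrite ltNge H //.
set f := fun i : nat => C1 * expR (- (C2 * i%:R * x i `^ gamma)).
have step2 : (\sum_(j < n) P (A j.+1) <= (\sum_(j < n) f j.+1)%:E)%E.
  rewrite -sumEFin; apply: lee_sum => j _; apply: hP => //; exact: xpos.
have sq : \sum_(1 <= i < n.+1) (i%:R ^+ 2)^-1 <= 2 :> R.
  case: (n) n1 => // n' _; apply: le_trans (@sq_sum R n') _.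
  by rewrite lerBlDr lerDl invr_ge0 ler0n.
have step3 : \sum_(j < n) f j.+1 <= C1 * (1 + 2 * c) * M * E.
  have -> : \sum_(j < n) f j.+1 = \sum_(1 <= i < n.+1) f i by rewrite big_add1 /= big_mkord.
  apply: (@le_trans _ _ (\sum_(1 <= i < n.+1)
     (C1 * E * (if (i <= K)%N then 1 else 0) + C1 * E * (c * (i%:R ^+ 2)^-1)))).
    rewrite big_nat [X in _ <= X]big_nat; apply: ler_sum => i /andP[i1 _].
    exact: (@term_bound R C1 C2 gamma delta y N p eps K k i hC1 hC2 g0 erefl p0 y1 (ltW N0) erefl eps0 pk k0 hK i1).
  rewrite big_split /= -!mulr_sumr.
  have Cs := @csum R n K.
  have E0 : 0 < E by rewrite expR_gt0.
  have CE0 : 0 <= C1 * E by rewrite mulr_ge0 // ltW.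
  have H1 : C1 * E * \sum_(1 <= i < n.+1) (if (i <= K)%N then 1 else 0) <= C1 * E * M.
    apply: ler_wpM2l => //; apply: (le_trans Cs).
    by apply: le_trans KM; rewrite ler_nat geq_minr.
  have H2 : C1 * E * (c * \sum_(1 <= i < n.+1) (i%:R ^+ 2)^-1) <= C1 * E * (2 * c * M).
    apply: ler_wpM2l => //.
    have : c * \sum_(1 <= i < n.+1) (i%:R ^+ 2)^-1 <= c * 2 by apply: ler_wpM2l.
    move=> H; apply: (le_trans H); rewrite mulrC -[X in X <= _]mulr1 ler_wpM2l //.
    by rewrite mulr_ge0.
  apply: (le_trans (lerD H1 H2)).
  rewrite le_eqVlt; apply/orP; left; apply/eqP; ring.
apply: (le_trans step1); apply: (le_trans step2).
by rewrite lee_fin.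
Qed.
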